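(* Let $\Sigma$ be a finite alphabet with $|\Sigma|\ge 2$, let $m,n$ be positive integers with $m\ge 2$, and let $\rho,\rho_1,\rho_2,\rho_3$ be real numbers with $0<\rho<1$, $\rho_1>0$, $\rho_2>0$, $\rho_3>0$ and $\rho_1+\rho_2+\rho_3\le 1$. Then the Markov chains with transition matrices $S^{\mathfrak{N}(n)}_{\rho_1,\rho_2,\rho_3}$, $S^{\mathfrak{N}_m(n)}_{\rho_1,\rho_2,\rho_3}$ and $S^{\mathfrak{N}'_m(n)}_{\rho_1,\rho_2,\rho_3}$ are aperiodic, and so are the Markov chains with transition matrices $S^{\mathfrak{N}(n)^\bullet}_{\rho}$, $S^{\mathfrak{N}_m(n)^\bullet}_{\rho}$ and $S^{\mathfrak{N}'_m(n)^\bullet}_{\rho}$.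
   Context: A non-deterministic automaton (NFA) over $\Sigma$ is a tuple $(Q,\Sigma,\Delta,I,F)$ with $Q$ a finite set of states, $\Delta\subseteq Q\times\Sigma\times Q$ the transitions, $I\subseteq Q$ the initial states and $F\subseteq Q$ the final states. A path is a sequence of transitions $(p_0,a_0,q_0)\cdots(p_k,a_k,q_k)$ with $q_i=p_{i+1}$. The NFA is accessible if every state is reachable by a path from an initial state, co-accessible if from every state a final state is reachable by a path, and trim if both. $\mathfrak{N}(n)$ is the set of trim NFAs over $\Sigma$ with state set $Q=\{1,\dots,n\}$. $\mathfrak{N}_m(n)$ is the set of automata in $\mathfrak{N}(n)$ such that for each state $p$ there are at most $m$ pairs $(a,q)$ with $(p,a,q)\in\Delta$. $\mathfrak{N}'_m(n)$ is the set of automata in $\mathfrak{N}(n)$ such that for each state $p$ and each letter $a$ there are at most $m$ states $q$ with $(p,a,q)\in\Delta$. For a class $\mathfrak{X}$, $\mathfrak{X}^\bullet$ is the subclass of automata whose set of initial states is exactly $\{1\}$. For an automaton $\mathcal{A}=(Q,\Sigma,\Delta,I,F)$: $\mathsf{Ch_{init}}(\mathcal{A},q)$ is $\mathcal{A}$ with $q$ removed from $I$ if $q\in I$ and added to $I$ otherwise; $\mathsf{Ch_{final}}(\mathcal{A},q)$ is defined similarly with $F$; $\mathsf{Ch_{trans}}(\mathcal{A},(p,a,q))$ is $\mathcal{A}$ with $(p,a,q)$ removed from $\Delta$ if present and added otherwise. For a class $\mathfrak{X}$ of automata with state set $Q=\{1,\dots,n\}$ and reals $\rho_i\in[0,1]$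 with $\rho_1+\rho_2+\rho_3\le1$, the matrix $S^{\mathfrak{X}}_{\rho_1,\rho_2,\rho_3}$ on $\mathfrak{X}\times\mathfrak{X}$ is: for $x\ne y$, $S(x,y)=\rho_1/n$ if $y=\mathsf{Ch_{init}}(x,q)$ for some $q$; $S(x,y)=\rho_2/n$ if $y=\mathsf{Ch_{final}}(x,q)$ for some $q$; $S(x,y)=\rho_3/(|\Sigma|n^2)$ if $y=\mathsf{Ch_{trans}}(x,(p,a,q))$ for some $(p,a,q)\in Q\times\Sigma\times Q$; $S(x,y)=0$ otherwise; and $S(x,x)=1-\sum_{y\ne x}S(x,y)$. For $\mathfrak{X}\in\{\mathfrak{N}(n),\mathfrak{N}_m(n),\mathfrak{N}'_m(n)\}$ and $0<\rho<1$, $S^{\mathfrak{X}^\bullet}_\rho$ is the matrix $S^{\mathfrak{X}^\bullet}_{0,\rho,1-\rho}$ defined by the same rules on the class $\mathfrak{X}^\bullet$. A Markov chain is aperiodic if for every state $x$ the gcd of the lengths of all cycles through $x$ in the graph of nonzero transition probabilities is $1$. *)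

(* Defs.v *)
From mathcomp Require Import all_boot all_order all_algebra.
Set Implicit Arguments. Unset Strict Implicit. Unset Printing Implicit Defensive.
Import Order.TTheory GRing.Theory Num.Theory.

(* NFAs over alphabet Sigma with state set Q = {1,...,n}, represented as
   'I_n (state i+1 of the paper is the ordinal i; state 1 is the ordinal 0).
   An automaton is a triple (I, F, Delta). *)
Section Automata.
Variables (Sigma : finType) (n : nat).

Definition aut := ({set 'I_n} * {set 'I_n} * {set ('I_n * Sigma * 'I_n)})%type.

Definition init (A : aut) : {set 'I_n} := A.1.1.
Definition final (A : aut) : {set 'I_n} := A.1.2.
Definition trans (A : aut) : {set ('I_n * Sigma * 'I_n)} := A.2.

Definition step (A : aut) : rel 'I_n :=
  fun p q => [exists a : Sigma, (p, a, q) \in trans A].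

Definition accessible (A : aut) : bool :=
  [forall q, [exists p in init A, connect (step A) p q]].
Definition coaccessible (A : aut) : bool :=
  [forall p, [exists q in final A, connect (step A) p q]].
Definition trim (A : aut) : bool := accessible A && coaccessible A.

Definition NFA : pred aut := fun A => trim A.
Definition NFA_m (m : nat) : pred aut := fun A =>
  trim A &&
  [forall p : 'I_n, #|[set aq : Sigma * 'I_n | (p, aq.1, aq.2) \in trans A]| <= m].
Definition NFA'_m (m : nat) : pred aut := fun A =>
  trim A &&
  [forall p : 'I_n, forall a : Sigma, #|[set q : 'I_n | (p, a, q) \in trans A]| <= m].

Definition bullet (X : pred aut) : pred aut := fun A =>
  X A && (init A == [set i : 'I_n | val i == 0%N]).

Definition toggle (T : finType) (S : {set T}) (x : T) : {set T} :=
  if x \in S then S :\ x else x |: S.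

Definition ch_init (A : aut) (q : 'I_n) : aut := (toggle (init A) q, final A, trans A).
Definition ch_final (A : aut) (q : 'I_n) : aut := (init A, toggle (final A) q, trans A).
Definition ch_trans (A : aut) (t : 'I_n * Sigma * 'I_n) : aut :=
  (init A, final A, toggle (trans A) t).

Variable R : realFieldType.
Local Open Scope ring_scope.

Definition Soff (r1 r2 r3 : R) (x y : aut) : R :=
  if [exists q, y == ch_init x q] then r1 / n%:R
  else if [exists q, y == ch_final x q] then r2 / n%:R
  else if [exists t, y == ch_trans x t] then r3 / (#|Sigma|%:R * n%:R ^+ 2)
  else 0.

(* the matrix S^X_{r1,r2,r3} on X x X (only its entries for x, y in X matter) *)
Definition Smat (X : pred aut) (r1 r2 r3 : R) (x y : aut) : R :=
  if x == y then 1 - \sum_(z | X z && (z != x)) Soff r1 r2 r3 x z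
  else Soff r1 r2 r3 x y.

Definition Sbullet (X : pred aut) (rho : R) : aut -> aut -> R :=
  Smat (bullet X) 0 rho (1 - rho).

Definition cycle_length (X : pred aut) (P : aut -> aut -> R) (x : aut) (k : nat) : Prop :=
  exists s : seq aut,
    [/\ size s = k, (0 < k)%N, all X s,
        path (fun u v => P u v != 0) x s & last x s == x].

(* aperiodicity: for every state x in X, the gcd of the cycle lengths through x
   is 1, i.e. 1 is the only common divisor of all of them *)
Definition aperiodic (X : pred aut) (P : aut -> aut -> R) : Prop :=
  forall x, X x ->
    forall d : nat, (forall k, cycle_length X P x k -> (d %| k)%N) -> d = 1%N.

End Automata.

(* Main.v *)
Require Import Defs.
From mathcomp Require Import all_boot all_order all_algebra ring lra.
Import Order.TTheory GRing.Theory Num.Theory.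
Set Implicit Arguments. Unset Strict Implicit. Unset Printing Implicit Defensive.
Local Open Scope ring_scope.

Section Helpers.
Variables (Sigma : finType) (n : nat) (R : realFieldType).

Lemma toggleK (T : finType) (S : {set T}) x : toggle (toggle S x) x = S.
Proof.
rewrite /toggle; case: (boolP (x \in S)) => h.
  by rewrite setD11 setD1K.
by rewrite setU11 setU1K.
Qed.

Lemma toggle_neq (T : finType) (S : {set T}) x : toggle S x != S.
Proof.
rewrite /toggle; case: (boolP (x \in S)) => h; apply/eqP => E.
  by move: h; rewrite -{1}E setD11.
by move: h; rewrite -E setU11.
Qed.

Lemma chfK (x : aut Sigma n) q : ch_final (ch_final x q) q = x.
Proof. by case: x => [[i f] t]; rewrite /ch_final /init /final /trans /= toggleK. Qed.

Lemma chf_neq (x : aut Sigma n) q : ch_final x q != x.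
Proof.
apply/eqP => E; have := toggle_neq (final x) q.
by rewrite -{2}E /ch_final /final /= eqxx.
Qed.

Lemma Soff_chf (r1 r2 r3 : R) (x : aut Sigma n) q :
  Soff r1 r2 r3 x (ch_final x q) = r2 / n%:R.
Proof.
rewrite /Soff.
have -> : [exists q', ch_final x q == ch_init x q'] = false.
  apply/existsP => -[q' /eqP E].
  have : final (ch_final x q) = final (ch_init x q') by rewrite E.
  rewrite /final /=; apply/eqP; exact: toggle_neq.
have -> : [exists q', ch_final x q == ch_final x q'] = true.
  by apply/existsP; exists q.
by [].
Qed.

Lemma sum_if1 (T : finType) (P : pred T) (y : T) (c : R) :
  \sum_(z | P z) (if z == y then c else 0) = if P y then c else 0.
Proof.
rewrite -big_mkcondr; case: (boolP (P y)) => hy.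
  by rewrite (big_pred1 y) // => z /=; case: (z =P y) => [->|_]; rewrite ?hy ?andbF ?eqxx.
rewrite big_pred0 // => z /=; case: (z =P y) => [->|_]; by rewrite ?(negbTE hy) ?andbF.
Qed.

Lemma sum_ind (T : finType) (U : finType) (P : pred T) (f : U -> T) (c : R) :
  \sum_(z | P z) \sum_(q : U) (if z == f q then c else 0)
  = \sum_(q : U) (if P (f q) then c else 0).
Proof.
rewrite exchange_big /=; apply: eq_bigr => q _; exact: sum_if1.
Qed.

Variables (X : pred (aut Sigma n)) (r1 r2 r3 : R).
Hypotheses (h1 : 0 <= r1) (h2 : 0 < r2) (h3 : 0 <= r3) (hs : r1 + r2 + r3 <= 1).
Hypotheses (hn : (0 < n)%N) (hS : (0 < #|Sigma|)%N).
Hypothesis hX : forall z, X z -> coaccessible z.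

Let P := Smat X r1 r2 r3.

Lemma selfloop (x : aut Sigma n) q0 : ~~ X (ch_final x q0) -> P x x != 0.
Proof.
move=> hq0.
have hnR : (0 : R) < n%:R by rewrite ltr0n.
have hSR : (0 : R) < #|Sigma|%:R by rewrite ltr0n.
set cA := r1 / n%:R. set cB := r2 / n%:R.
set cC := r3 / (#|Sigma|%:R * n%:R ^+ 2).
have cA0 : 0 <= cA by rewrite divr_ge0 // ltW.
have cB0 : 0 < cB by rewrite divr_gt0.
have cC0 : 0 <= cC by rewrite divr_ge0 // ?mulr_ge0 ?exprn_ge0 ?ltW.
pose A z := \sum_(q : 'I_n) (if z == ch_init x q then cA else 0).
pose B z := \sum_(q : 'I_n) (if z == ch_final x q then cB else 0).
pose C z := \sum_(t : 'I_n * Sigma * 'I_n) (if z == ch_trans x t then cC else 0).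
have nn (c : R) (T : finType) (g : T -> aut Sigma n) z : 0 <= c ->
   0 <= \sum_(q : T) (if z == g q then c else 0).
  by move=> c0; apply: sumr_ge0 => q _; case: ifP.
have ge1 (c : R) (T : finType) (g : T -> aut Sigma n) z q : 0 <= c -> z == g q ->
   c <= \sum_(q : T) (if z == g q then c else 0).
  move=> c0 e; rewrite (bigD1 q) //= e; rewrite lerDl.
  by apply: sumr_ge0 => q' _; case: ifP.
have bnd z : Soff r1 r2 r3 x z <= A z + B z + C z.
  have := nn _ _ (ch_init x) z cA0; have := nn _ _ (ch_final x) z (ltW cB0).
  have := nn _ _ (ch_trans x) z cC0.
  rewrite /Soff -/cA -/cB -/cC /A /B /C.
  case: existsP => [[q e] ? ? ?|_].
    have := ge1 _ _ _ z q cA0 e; lra.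
  case: existsP => [[q e] ? ? ?|_].
    have := ge1 _ _ _ z q (ltW cB0) e; lra.
  case: existsP => [[q e] ? ? ?|_].
    have := ge1 _ _ _ z q cC0 e; lra.
  lra.
rewrite /P /Smat eqxx.
set Q := fun z => X z && (z != x).
have le1 : \sum_(z | Q z) Soff r1 r2 r3 x z <= \sum_(z | Q z) (A z + B z + C z).
  by apply: ler_sum => z _; exact: bnd.
rewrite !big_split /= /A /B /C !sum_ind in le1.
have eA : \sum_(q : 'I_n) (if Q (ch_init x q) then cA else 0) <= r1.
  apply: le_trans (_ : \sum_(q : 'I_n) cA <= r1).
    by apply: ler_sum => q _; case: ifP.
  by rewrite sumr_const card_ord -mulr_natr /cA divfK // gt_eqF.
have eC : \sum_(t : 'I_n * Sigma * 'I_n) (if Q (ch_trans x t) then cC else 0) <= r3.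
  apply: le_trans (_ : \sum_(t : 'I_n * Sigma * 'I_n) cC <= r3).
    by apply: ler_sum => q _; case: ifP.
  rewrite sumr_const !card_prod card_ord -mulr_natr /cC !natrM.
  rewrite le_eqVlt; apply/orP; left; apply/eqP; field.
  by rewrite !gt_eqF.
have eB : \sum_(q : 'I_n) (if Q (ch_final x q) then cB else 0) < r2.
  rewrite (bigD1 q0) //= {1}/Q (negbTE hq0) /= add0r.
  apply: (@le_lt_trans _ _ (\sum_(q | q != q0) cB)).
    by apply: ler_sum => q _; case: ifP => _ //; exact: ltW.
  have : \sum_(q : 'I_n) cB = r2.
    by rewrite sumr_const card_ord -mulr_natr /cB divfK // gt_eqF.
  rewrite (bigD1 q0) //=; lra.
rewrite subr_eq0; apply/eqP => E; move: le1; rewrite -E => H.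
have H2 := ltr_leD (ler_ltD eA eB) eC.
have := lt_le_trans (le_lt_trans H H2) hs; by rewrite ltxx.
Qed.


Lemma P_chf (x : aut Sigma n) q : P x (ch_final x q) != 0.
Proof.
rewrite /P /Smat (eq_sym x) (negbTE (chf_neq x q)) Soff_chf.
by rewrite mulf_neq0 // ?invr_eq0 gt_eqF // ?ltr0n.
Qed.

Lemma P_chf' (x : aut Sigma n) q : P (ch_final x q) x != 0.
Proof. by rewrite -{2}(chfK x q); apply: P_chf. Qed.

Lemma cycles (x : aut Sigma n) : X x ->
  exists k, cycle_length X P x (2*k+1) /\ cycle_length X P x (2*k+2).
Proof.
move: {-1}(#|final x|.+1) (ltnSn #|final x|) => N.
elim: N x => [//|N IH] x hN hx.
case: (boolP [exists q, ~~ X (ch_final x q)]) => [/existsP [q0 hq0]|hall].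
  exists 0%N; have sl := selfloop hq0; split.
    by exists [:: x]; rewrite /= sl hx eqxx.
  by exists [:: x; x]; rewrite /= sl hx eqxx.
have := hX hx => /forallP /(_ (Ordinal hn)) /existsP [q /andP [hq _]].
have hy : X (ch_final x q).
  by move: hall; rewrite negb_exists => /forallP /(_ q); rewrite negbK.
have hN' : (#|final (ch_final x q)| < N)%N.
  move: hN; rewrite (cardsD1 q (final x)) hq /final /= /toggle hq.
  by rewrite add1n ltnS.
have [k [[s [hs1 hs2 hs3 hs4 hs5]] [t [ht1 ht2 ht3 ht4 ht5]]]] := IH _ hN' hy.
exists k.+1; split.
  exists (ch_final x q :: rcons s x).
  rewrite /= size_rcons hs1 all_rcons hx hy hs3 P_chf rcons_path hs4 (eqP hs5).
  by rewrite P_chf' last_rcons eqxx mulnS !addSn !addnS.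
exists (ch_final x q :: rcons t x).
rewrite /= size_rcons ht1 all_rcons hx hy ht3 P_chf rcons_path ht4 (eqP ht5).
by rewrite P_chf' last_rcons eqxx mulnS !addSn !addnS.
Qed.

Lemma aper : aperiodic X P.
Proof.
move=> x hx d hd; have [k [c1 c2]] := cycles hx.
have := dvdn_sub (hd _ c2) (hd _ c1).
by rewrite addnS subSn ?leqnSn // subnn dvdn1 => /eqP.
Qed.

End Helpers.

Theorem lemma2 (R : realFieldType) (Sigma : finType) (m n : nat)
    (rho rho1 rho2 rho3 : R) :
  (2 <= #|Sigma|)%N -> (0 < n)%N -> (2 <= m)%N ->
  0 < rho -> rho < 1 ->
  0 < rho1 -> 0 < rho2 -> 0 < rho3 -> rho1 + rho2 + rho3 <= 1 ->
    aperiodic (@NFA Sigma n) (Smat (@NFA Sigma n) rho1 rho2 rho3) /\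
      aperiodic (@NFA_m Sigma n m) (Smat (@NFA_m Sigma n m) rho1 rho2 rho3) /\
      aperiodic (@NFA'_m Sigma n m) (Smat (@NFA'_m Sigma n m) rho1 rho2 rho3) /\
      aperiodic (bullet (@NFA Sigma n)) (Sbullet (@NFA Sigma n) rho) /\
      aperiodic (bullet (@NFA_m Sigma n m)) (Sbullet (@NFA_m Sigma n m) rho) /\
      aperiodic (bullet (@NFA'_m Sigma n m)) (Sbullet (@NFA'_m Sigma n m) rho).
Proof.
move=> hS hn hm r0 r1 p1 p2 p3 ps.
have hS' : (0 < #|Sigma|)%N by apply: leq_trans hS.
have b0 : (0 : R) <= 0 by [].
have b1 : (0 : R) <= 1 - rho by rewrite subr_ge0 ltW.
have bs : 0 + rho + (1 - rho) <= 1 :> R by rewrite add0r addrC subrK.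
rewrite /Sbullet.
split; [|split; [|split; [|split; [|split]]]].
- apply: (@aper Sigma n R (@NFA Sigma n) _ _ _ (ltW p1) p2 (ltW p3) ps hn hS').
  by move=> z /andP [].
- apply: (@aper Sigma n R (@NFA_m Sigma n m) _ _ _ (ltW p1) p2 (ltW p3) ps hn hS').
  by move=> z /andP [/andP [] ].
- apply: (@aper Sigma n R (@NFA'_m Sigma n m) _ _ _ (ltW p1) p2 (ltW p3) ps hn hS').
  by move=> z /andP [/andP [] ].
- apply: (@aper Sigma n R (bullet (@NFA Sigma n)) _ _ _ b0 r0 b1 bs hn hS').
  by move=> z /andP [/andP [] ].
- apply: (@aper Sigma n R (bullet (@NFA_m Sigma n m)) _ _ _ b0 r0 b1 bs hn hS').
  by move=> z /andP [/andP [/andP [] ] ].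
- apply: (@aper Sigma n R (bullet (@NFA'_m Sigma n m)) _ _ _ b0 r0 b1 bs hn hS').
  by move=> z /andP [/andP [/andP [] ] ].
Qed.
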